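(* Let $F$ be a field of characteristic $0$, $V$ an $n$-dimensional $F$-vector space, $G\le\mathrm{GL}(V)$ a finite group generated by pseudo-reflections, and $M$ an $r$-dimensional $F[G]$-module with $M^G=0$. For $1\le i,j\le r$ let $L_{ij}\in\mathrm{S}(V)^G$ be the element with $d_i^*\delta_j^*+\delta_j^*d_i^*=\partial_{L_{ij}}$ on $\mathrm{S}(V^* )\otimes\wedge M^*$. Then each $L_{ij}$ is homogeneous of positive degree, and each $d_i^*$ maps $\mathcal{H}(\mathrm{S}(V^* )\otimes\wedge M^* )$ into itself.
   Context: $G$ acts contragrediently on $V^*,M^*$ and diagonally on tensor products of symmetric algebras $\mathrm{S}(\cdot)$ and exterior algebras $\wedge(\cdot)$. $(\mathrm{S}(V)\otimes M^* )^G$ and $(\mathrm{S}(V)\otimes M)^G$ are free $\mathrm{S}(V)^G$-modules with homogeneous bases $\tilde\omega_1^{M^*},\dots,\tilde\omega_r^{M^*}$ and $\tilde\omega_1^{M},\dots,\tilde\omega_r^{M}$ respectively. For $s\in\mathrm{S}(V)$, $\partial_s$ is the constant-coefficient differential operator on $\mathrm{S}(V^* )$ ($\partial_v$ the derivation with $\partial_v\lambda=\lambda(v)$, extended multiplicatively; $s\mapsto\partial_s$ is injective), acting as $\partial_s\otimes\mathrm{id}$. $\epsilon_\mu$ is left exterior multiplication by $\mu\in M^*$ and $\iota_m$ ($m\in M$) is the anti-derivation of $\wedge M^*$ with $\iota_m(\xi)=\xi(m)$. If $\tilde\omega_i^{M^*}=\sum_k s_k\otimes\mu_k$ then $d_i^*=\sum_k\partial_{s_k}\otimes\epsilon_{\mu_k}$;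 if $\tilde\omega_j^M=\sum_kt_k\otimes m_k$ then $\delta_j^*=\sum_k\partial_{t_k}\otimes\iota_{m_k}$. $\mathcal{J}_M\subset\mathrm{S}(V)\otimes\wedge M$ is the ideal generated by homogeneous $G$-invariants of positive degree. The pairing $\mathrm{S}(V^* )\otimes\wedge M^*\times\mathrm{S}(V)\otimes\wedge M\to F$ is $\langle f\otimes\nu,s\otimes\ell\rangle=\langle f,s\rangle\langle\nu,\ell\rangle$ with $\langle\lambda_1\cdots\lambda_k,v_1\cdots v_l\rangle=\delta_{kl}\sum_{\sigma\in\mathfrak{S}_k}\prod_i\lambda_i(v_{\sigma(i)})$ and $\langle\xi_1\wedge\cdots\wedge\xi_k,m_1\wedge\cdots\wedge m_l\rangle=\delta_{kl}\det(\xi_i(m_j))$; $\mathcal{H}(\mathrm{S}(V^* )\otimes\wedge M^* )=\{\omega:\langle\omega,\xi\rangle=0\ \forall\xi\in\mathcal{J}_M\}$. *)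

(* Defs.v *)
From HB Require Import structures.
From mathcomp Require Import all_boot all_order all_algebra all_fingroup.
From mathcomp Require Import mxrepresentation.
From mathcomp Require Export mpoly.

Set Implicit Arguments.
Unset Strict Implicit.
Unset Printing Implicit Defensive.

Import GRing.Theory.
Local Open Scope ring_scope.

(* Conventions:
   V = F^n with basis e_0..e_{n-1}; S(V) = {mpoly F[n]} with 'X_k <-> e_k.
   V^* has the dual basis; S(V^* ) = {mpoly F[n]} with 'X_k <-> e_k^*.
   M = F^r with basis m_0..m_{r-1}; M^* has the dual basis m_a^*.
   An element of S(V)(x)M (resp. S(V)(x)M^* ) is x = sum_a x a (x) m_a
   (resp. m_a^* ), stored as {ffun 'I_r -> {mpoly F[n]}}.
   An element of S(V)(x)/\M (resp. S(V^* )(x)/\M^* ) is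
   x = sum_S x S (x) m_S, with m_S = m_{s1} /\ ... /\ m_{sk}, s1 < ... < sk,
   stored as {ffun {set 'I_r} -> {mpoly F[n]}}.
   A group element g acts on V by the matrix rV g (on row vectors:
   e_k |-> sum_l rV g k l e_l) and on M by rM g. *)

Section Defs.
Variables (F : fieldType) (n r : nat).
Local Notation P := {mpoly F[n]}.

Definition ext := {ffun {set 'I_r} -> P}.

Definition pseudo_reflection (A : 'M[F]_n) : bool := \rank (A - 1%:M) == 1%N.

Definition actS (A : 'M[F]_n) (p : P) : P :=
  p \mPo [tuple \sum_(l < n) A k l *: 'X_l | k < n].

(* sign of m_S /\ m_T = wsign S T m_{S :|: T} for disjoint S, T *)
Definition wsign (S T : {set 'I_r}) : P :=
  (-1) ^+ #|[set p : 'I_r * 'I_r | [&& p.1 \in S, p.2 \in T & (p.2 < p.1)%N]]|.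

Definition wedge (x y : ext) : ext :=
  [ffun U => \sum_(S : {set 'I_r})
               \sum_(T : {set 'I_r} | [disjoint S & T] && (S :|: T == U))
                 wsign S T * x S * y T].

Definition ext_one : ext := [ffun S => (S == set0)%:R].

Definition ext1 (v : 'I_r -> P) : ext :=
  [ffun S => \sum_(a : 'I_r | S == [set a]) v a].

Definition ext_map (f : P -> P) (x : ext) : ext := [ffun S => f (x S)].

(* constant coefficient differential operator partial_s on S(V^* ):
   partial_{e_k} = d/d('X_k) *)
Definition Dop (s : P) (f : P) : P :=
  \sum_(m <- msupp s) s@_m *: mderivm m f.

Definition eps (a : 'I_r) (x : ext) : ext :=
  wedge (ext1 (fun b => (b == a)%:R)) x.

(* iota_{m_a} : the anti-derivation of /\M^* with iota_{m_a}(m_b^* ) = delta_ab *)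
Definition iota (a : 'I_r) (x : ext) : ext :=
  [ffun U : {set 'I_r} => if a \in U then 0
             else (-1) ^+ #|[set u in U | (u < a)%N]| * x (a |: U)].

(* d^* and delta^* associated to sum_a w a (x) m_a^* and sum_a w a (x) m_a *)
Definition dstar (w : {ffun 'I_r -> P}) (x : ext) : ext :=
  \sum_(a < r) eps a (ext_map (Dop (w a)) x).

Definition deltastar (w : {ffun 'I_r -> P}) (x : ext) : ext :=
  \sum_(a < r) iota a (ext_map (Dop (w a)) x).

(* the pairing S(V^* ) x S(V) -> F in coordinates:
   <Y^alpha, X^beta> = delta_{alpha beta} alpha! *)
Definition polypair (f s : P) : F :=
  \sum_(m <- msupp f) f@_m * s@_m * (\prod_(i < n) (m i)`!)%:R.

Definition extpair (x y : ext) : F := \sum_(S : {set 'I_r}) polypair (x S) (y S).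

Definition ext_homog (e : nat) (x : ext) : Prop :=
  forall S, x S != 0 -> (#|S| <= e)%N /\ x S \is (e - #|S|)%N.-homog.

Section Group.
Variables (gT : finGroupType) (G : {group gT}).
Variables (rV : mx_representation F G n) (rM : mx_representation F G r).

Definition invS (p : P) : Prop := forall g, g \in G -> actS (rV g) p = p.

Definition actM (g : gT) (x : {ffun 'I_r -> P}) : {ffun 'I_r -> P} :=
  [ffun b => \sum_(a < r) rM g a b *: actS (rV g) (x a)].

(* diagonal action on S(V)(x)M^* (contragredient on M^* ) *)
Definition actMs (g : gT) (x : {ffun 'I_r -> P}) : {ffun 'I_r -> P} :=
  [ffun b => \sum_(a < r) rM (g^-1)%g b a *: actS (rV g) (x a)].

Definition actE (g : gT) (x : ext) : ext :=
  \sum_(S : {set 'I_r})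
     ext_map (fun c => actS (rV g) (x S) * c)
       (\big[wedge/ext_one]_(s <- enum S) ext1 (fun b => (rM g s b)%:MP)).

Definition invM (x : {ffun 'I_r -> P}) : Prop := forall g, g \in G -> actM g x = x.
Definition invMs (x : {ffun 'I_r -> P}) : Prop := forall g, g \in G -> actMs g x = x.
Definition invE (x : ext) : Prop := forall g, g \in G -> actE g x = x.

Definition hom_basis (inv : {ffun 'I_r -> P} -> Prop)
    (w : 'I_r -> {ffun 'I_r -> P}) : Prop :=
  [/\ forall i, inv (w i),
      forall i, exists d, forall a, w i a \is d.-homog,
      forall x, inv x -> exists c : 'I_r -> P,
          (forall i, invS (c i)) /\ x = [ffun a => \sum_(i < r) c i * w i a]
    & forall c : 'I_r -> P, (forall i, invS (c i)) ->
          [ffun a => \sum_(i < r) c i * w i a] = 0 -> forall i, c i = 0].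

Definition no_fixed_points : Prop :=
  forall v : 'rV[F]_r, (forall g, g \in G -> v *m rM g = v) -> v = 0.

(* membership in the ideal J_M of S(V)(x)/\M generated by the homogeneous
   G-invariants of positive degree *)
Definition inJ (xi : ext) : Prop :=
  exists k (a b c : 'I_k -> ext),
    (forall i, invE (b i) /\ exists2 e, (0 < e)%N & ext_homog e (b i)) /\
    xi = \sum_(i < k) wedge (wedge (a i) (b i)) (c i).

Definition harmonic (x : ext) : Prop := forall xi, inJ xi -> extpair x xi = 0.

End Group.
End Defs.

(* Main.v *)
Require Import Defs.
From HB Require Import structures.
From mathcomp Require Import all_boot all_order all_algebra all_fingroup.
From mathcomp Require Import mxrepresentation.
From mathcomp Require Import mpoly.
From mathcomp Require Import ring zify.
Unset Strict Implicit.
Unset Printing Implicit Defensive.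
Import GRing.Theory.
Local Open Scope ring_scope.

Module DevA.


Section Poly.
Variables (F : fieldType) (n : nat).
Local Notation P := {mpoly F[n]}.
Local Notation cf m := ((\prod_(i < n) (m i)`!)%N%:R : F).
Implicit Types (f g s t : P).

Lemma big_msupp_ext (p : P) (G : 'X_{1..n} -> F) (l : seq 'X_{1..n}) :
  uniq l -> {subset msupp p <= l} -> (forall m, p@_m = 0 -> G m = 0) ->
  \sum_(m <- msupp p) G m = \sum_(m <- l) G m.
Proof.
move=> ul sub h0; rewrite [RHS](bigID (mem (msupp p))) /=.
rewrite [X in _ = _ + X]big1 ?addr0; last first.
  by move=> m /memN_msupp_eq0 /h0.
rewrite -[in RHS]big_filter; apply: perm_big; apply: uniq_perm.
- exact: msupp_uniq.
- exact: filter_uniq.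
move=> m; rewrite mem_filter; apply/idP/andP => [h|[]//].
by split=> //; apply: sub.
Qed.

Lemma polypairE (f s : P) l : uniq l -> {subset msupp f <= l} ->
  polypair f s = \sum_(m <- l) f@_m * s@_m * cf m.
Proof.
move=> ul sub; rewrite /polypair; apply: big_msupp_ext => // m ->.
by rewrite !mul0r.
Qed.

Lemma polypairDl f g s : polypair (f + g) s = polypair f s + polypair g s.
Proof.
set l := undup (msupp f ++ msupp g ++ msupp (f + g)).
have ul : uniq l by apply: undup_uniq.
have s1 : {subset msupp f <= l} by move=> m h; rewrite mem_undup !mem_cat h.
have s2 : {subset msupp g <= l} by move=> m h; rewrite mem_undup !mem_cat h ?orbT.
have s3 : {subset msupp (f + g) <= l} by move=> m h; rewrite mem_undup !mem_cat h ?orbT.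
rewrite (polypairE _ _ _ ul s1) (polypairE _ _ _ ul s2) (polypairE _ _ _ ul s3) -big_split /=.
by apply: eq_bigr => m _; rewrite mcoeffD; ring.
Qed.

Lemma polypair0l s : polypair 0 s = 0.
Proof. by rewrite /polypair msupp0 big_nil. Qed.

Lemma polypairZl c f s : polypair (c *: f) s = c * polypair f s.
Proof.
rewrite (polypairE (c *: f) s _ (msupp_uniq f)); last first.
  move=> m; rewrite !mcoeff_msupp mcoeffZ; apply: contraNN => /eqP ->.
  by rewrite mulr0.
rewrite /polypair mulr_sumr; apply: eq_bigr => m _; rewrite mcoeffZ; ring.
Qed.

Lemma polypair_suml I (rr : seq I) (Q : pred I) (f : I -> P) s :
  polypair (\sum_(i <- rr | Q i) f i) s = \sum_(i <- rr | Q i) polypair (f i) s.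
Proof.
elim: rr => [|x rr ih]; first by rewrite !big_nil polypair0l.
by rewrite !big_cons; case: (Q x); rewrite ?polypairDl ih.
Qed.

Lemma polypairDr f s t : polypair f (s + t) = polypair f s + polypair f t.
Proof. by rewrite /polypair -big_split; apply: eq_bigr => m _; rewrite mcoeffD /= mulrDr mulrDl. Qed.

Lemma polypair0r f : polypair f 0 = 0.
Proof. by rewrite /polypair big1 // => m _; rewrite mcoeff0; ring. Qed.

Lemma polypairZr c f s : polypair f (c *: s) = c * polypair f s.
Proof.
rewrite /polypair mulr_sumr; apply: eq_bigr => m _; rewrite mcoeffZ; ring.
Qed.

Lemma polypair_sumr I (rr : seq I) (Q : pred I) (g : I -> P) f :
  polypair f (\sum_(i <- rr | Q i) g i) = \sum_(i <- rr | Q i) polypair f (g i).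
Proof.
elim: rr => [|x rr ih]; first by rewrite !big_nil polypair0r.
by rewrite !big_cons; case: (Q x); rewrite ?polypairDr ih.
Qed.

Lemma polypairNl f s : polypair (- f) s = - polypair f s.
Proof. by rewrite -scaleN1r polypairZl mulN1r. Qed.
Lemma polypairNr f s : polypair f (- s) = - polypair f s.
Proof. by rewrite -scaleN1r polypairZr mulN1r. Qed.

Lemma polypair_signl k f s : polypair ((-1) ^+ k * f) s = (-1) ^+ k * polypair f s.
Proof.
by rewrite -signr_odd -[in RHS]signr_odd; case: (odd k); rewrite ?expr1 ?expr0 ?mul1r ?mulN1r ?polypairNl.
Qed.
Lemma polypair_signr k f s : polypair f ((-1) ^+ k * s) = (-1) ^+ k * polypair f s.
Proof.
by rewrite -signr_odd -[in RHS]signr_odd; case: (odd k); rewrite ?expr1 ?expr0 ?mul1r ?mulN1r ?polypairNr.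
Qed.

Lemma polypairX m s : polypair 'X_[m] s = s@_m * cf m.
Proof. by rewrite /polypair msuppX big_seq1 mcoeffX eqxx mul1r. Qed.

Lemma polypair_derX u a c :
  polypair (mderivm u 'X_[a]) 'X_[c] = polypair 'X_[a] ('X_[u] * 'X_[c] : P).
Proof.
rewrite mderivmX polypairZl polypairX -mpolyXD polypairX !mcoeffX.
have [eqa|nea] := eqVneq (u + c)%MM a.
  rewrite mul1r.
  have -> : (a - u)%MM = c by rewrite -eqa addmC addmK.
  rewrite eqxx mul1r -natrM; congr (_%:R).
  rewrite -big_split /=; apply: eq_bigr => i _.
  rewrite -eqa mnmDE -{2}(addKn (u i) (c i)) ffact_fact //.
  by rewrite leq_addr.
rewrite mul0r; case: eqP => [ec|_]; last by rewrite mul0r mulr0.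
case: (boolP [forall i, (u i <= a i)%N]) => [/forallP hle|].
  exfalso; move/eqP: nea; apply; apply/mnmP => i.
  by rewrite mnmDE ec mnmBE subnKC.
rewrite negb_forall => /existsP [i]; rewrite -ltnNge => lt.
by rewrite (bigD1 i) //= ffact_small // mul0n mulr0n mul0r.
Qed.

Lemma polypair_der u f p : polypair (mderivm u f) p = polypair f ('X_[u] * p).
Proof.
rewrite [f]mpolyE raddf_sum !polypair_suml; apply: eq_bigr => a _.
rewrite /= mderivmZ !polypairZl; congr (_ * _).
rewrite [p]mpolyE mulr_sumr !polypair_sumr; apply: eq_bigr => c _.
by rewrite -scalerAr !polypairZr -polypair_derX.
Qed.

Lemma Dop0 s : Dop s 0 = 0.
Proof. by rewrite /Dop big1 // => m _; rewrite raddf0 scaler0. Qed.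

Lemma DopD s f g : Dop s (f + g) = Dop s f + Dop s g.
Proof. by rewrite /Dop -big_split; apply: eq_bigr => m _; rewrite raddfD scalerDr. Qed.

Lemma Dop_sum s I (rr : seq I) (Q : pred I) (f : I -> P) :
  Dop s (\sum_(i <- rr | Q i) f i) = \sum_(i <- rr | Q i) Dop s (f i).
Proof.
elim: rr => [|x rr ih]; first by rewrite !big_nil Dop0.
by rewrite !big_cons; case: (Q x); rewrite ?DopD ih.
Qed.

Lemma polypair_Dop s f p : polypair (Dop s f) p = polypair f (s * p).
Proof.
rewrite /Dop polypair_suml [in RHS](mpolyE s) mulr_suml polypair_sumr.
apply: eq_bigr => m _; rewrite polypairZl -scalerAl polypairZr polypair_der //.
Qed.

End Poly.

End DevA.
Import DevA.

Module DevB.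


Section Ext.
Variables (F : fieldType) (n r : nat).
Local Notation P := {mpoly F[n]}.
Local Notation E := (ext F n r).
Implicit Types (x y z : E) (S T U W : {set 'I_r}) (a : 'I_r).

Definition mulE (p : P) x : E := ext_map (fun c => p * c) x.
Definition tau x : E := [ffun S : {set 'I_r} => (-1) ^+ #|S| * x S].
Definition cnt S a := (\sum_(u in S) (u < a))%N.
Definition cntg S a := (\sum_(u in S) (a < u))%N.
Definition inv S T := (\sum_(s in S) \sum_(t in T) (t < s))%N.

Lemma addE x y S : (x + y) S = x S + y S.
Proof. by rewrite ffunE. Qed.

Lemma cntE S a : #|[set u in S | (u < a)%N]| = cnt S a.
Proof.
rewrite /cnt -sum1_card (eq_bigl (fun u => (u \in S) && (u < a)%N)).
  by rewrite big_mkcondr; apply: eq_bigr => u _; case: (u < a)%N.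
by move=> u; rewrite inE.
Qed.

Lemma inv_cardE S T : #|[set p : 'I_r * 'I_r | [&& p.1 \in S, p.2 \in T & (p.2 < p.1)%N]]| = inv S T.
Proof.
rewrite /inv -sum1_card.
rewrite (eq_bigr (fun s : 'I_r => \sum_(t : 'I_r | (t \in T) && (t < s)%N) 1%N)); last first.
  by move=> s _; rewrite big_mkcondr; apply: eq_bigr => t _; case: (t < s)%N.
rewrite pair_big_dep; apply: eq_bigl => p; rewrite inE; by case: p.
Qed.

Lemma wsignE S T : wsign F n S T = (-1) ^+ inv S T.
Proof. by rewrite /wsign inv_cardE. Qed.

Lemma wedgeE x y U : wedge x y U =
  \sum_(S : {set 'I_r} | S \subset U) (-1) ^+ inv S (U :\: S) * x S * y (U :\: S).
Proof.
rewrite ffunE (bigID (fun S => S \subset U)) /=.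
rewrite [X in _ + X]big1 ?addr0; last first.
  move=> S nsub; rewrite big1 // => T /andP [_ /eqP e].
  by move: nsub; rewrite -e subsetUl.
apply: eq_bigr => S sub; rewrite (big_pred1 (U :\: S)) ?wsignE //.
move=> T /=; apply/andP/eqP => [[dis /eqP <-] | ->].
  rewrite setDUl setDv set0U; apply/esym/setDidPl; by rewrite disjoint_sym.
split; last by apply/eqP; rewrite -{1}(setIidPr sub) setID.
rewrite -setI_eq0; apply/eqP/setP => u; rewrite !inE.
by case: (u \in S); rewrite ?andbF.
Qed.

Lemma iotaE a x U : Defs.iota a x U =
  if a \in U then 0 else (-1) ^+ cnt U a * x (a |: U).
Proof. by rewrite ffunE cntE. Qed.

Lemma tauE x S : tau x S = (-1) ^+ #|S| * x S.
Proof. by rewrite ffunE. Qed.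

Lemma mulEE p x S : mulE p x S = p * x S.
Proof. by rewrite ffunE. Qed.

Lemma sum_setU1 (V : nmodType) a (Q : pred {set 'I_r}) (G : {set 'I_r} -> V) :
  \sum_(S : {set 'I_r} | Q S && (a \in S)) G S = \sum_(T : {set 'I_r} | Q (a |: T) && (a \notin T)) G (a |: T).
Proof.
rewrite (reindex_onto (fun T => a |: T) (fun S => S :\ a)) /=; last first.
  by move=> S /andP [_ h]; exact: setD1K.
apply: eq_bigl => T; rewrite setU11 andbT.
case: (boolP (a \in T)) => h; last by rewrite setU1K // eqxx.
have -> : ((a |: T) :\ a == T) = false.
  by apply/negbTE/eqP => e; move: h; rewrite -e !inE eqxx.
by rewrite !andbF.
Qed.

Lemma inv_setU1l a S T : a \notin S -> inv (a |: S) T = (cnt T a + inv S T)%N.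
Proof. by move=> h; rewrite /inv big_setU1. Qed.

Lemma inv_setU1r a S T : a \notin T -> inv S (a |: T) = (cntg S a + inv S T)%N.
Proof.
move=> h; rewrite /inv /cntg -big_split /=; apply: eq_bigr => s _.
by rewrite big_setU1.
Qed.

Lemma card_cnt a S : a \notin S -> #|S| = (cnt S a + cntg S a)%N.
Proof.
move=> h; rewrite /cnt /cntg -big_split /= -sum1_card; apply: eq_big => // s sS.
have : s != a by apply: contraNneq h => <-.
by case: ltngtP => // /val_inj ->; rewrite eqxx.
Qed.

Lemma cnt_sub a S U : S \subset U -> cnt U a = (cnt S a + cnt (U :\: S) a)%N.
Proof. by move=> sub; rewrite /cnt (big_setID S) /= (setIidPr sub). Qed.

Lemma sg2 k w : (-1) ^+ (k + w + w) = (-1) ^+ k :> P.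
Proof. by rewrite -signr_odd !oddD -addbA addbb addbF signr_odd. Qed.

Lemma zeroE S : (0 : E) S = 0.
Proof. by rewrite ffunE. Qed.

Lemma comb4 (A B C D G X Y : P) : C * D * G = - (A * B) ->
  A * (B * X) * Y + C * (D * X) * (G * Y) = 0.
Proof.
move=> h; transitivity ((A * B + C * D * G) * X * Y); first ring.
by rewrite h addrN !mul0r.
Qed.

Lemma comb5 (A B C D X Y : P) : A * B = C * D ->
  A * (B * X * Y) = C * (D * X) * Y.
Proof.
move=> h; transitivity ((A * B) * X * Y); first ring.
by rewrite h; ring.
Qed.

Lemma comb6 (A B C D G X Y : P) : A * B = C * D * G ->
  A * (B * X * Y) = C * (D * X) * (G * Y).
Proof.
move=> h; transitivity ((A * B) * X * Y); first ring.
by rewrite h; ring.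
Qed.

Lemma iota_wedge a x y :
  Defs.iota a (wedge x y) = wedge (Defs.iota a x) y + wedge (tau x) (Defs.iota a y).
Proof.
apply/ffunP => U; rewrite addE iotaE !wedgeE.
case: (boolP (a \in U)) => aU.
  have h1 : \sum_(S : {set 'I_r} | S \subset U)
      (-1) ^+ inv S (U :\: S) * Defs.iota a x S * y (U :\: S) =
    \sum_(T : {set 'I_r} | (T \subset U) && (a \notin T))
      (-1) ^+ inv T (U :\: T) * ((-1) ^+ cnt T a * x (a |: T)) * y (U :\: T).
    rewrite (bigID (fun S => a \in S)) /= big1 ?add0r.
      by apply: eq_bigr => T /andP [_ h]; rewrite iotaE (negbTE h).
    by move=> S /andP [_ h]; rewrite iotaE h mulr0 mul0r.
  have h2 : \sum_(S : {set 'I_r} | S \subset U)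
      (-1) ^+ inv S (U :\: S) * tau x S * Defs.iota a y (U :\: S) =
    \sum_(T : {set 'I_r} | (T \subset U) && (a \notin T))
      (-1) ^+ inv (a |: T) (U :\: (a |: T)) * ((-1) ^+ #|a |: T| * x (a |: T)) *
      ((-1) ^+ cnt (U :\: (a |: T)) a * y (a |: (U :\: (a |: T)))).
    rewrite (bigID (fun S => a \in S)) /= [X in _ + X]big1 ?addr0; last first.
      by move=> S /andP [_ h]; rewrite iotaE !inE h aU /= mulr0.
    rewrite sum_setU1; apply: eq_big => T.
      by rewrite subUset sub1set aU.
    move=> /andP [_ aT]; rewrite tauE iotaE.
    by have -> : (a \in U :\: (a |: T)) = false by rewrite !inE eqxx.
  rewrite h1 h2 -big_split /= big1 // => T /andP [TU aT].
  set W' := U :\: (a |: T).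
  have eW' : W' = (U :\: T) :\ a.
    apply/setP => u; rewrite !inE.
    by case: (u == a); case: (u \in T); case: (u \in U).
  have aW' : a \notin W' by rewrite eW' !inE eqxx.
  have eW : U :\: T = a |: W' by rewrite eW' setD1K // !inE aU aT.
  rewrite eW inv_setU1r // inv_setU1l // cardsU1 aT (card_cnt _ _ aT) /=.
  apply: comb4; rewrite -!exprD.
  rewrite (_ : (_ + _ + _)%N = ((cntg T a + inv T W') + cnt T a).+1 + cnt W' a + cnt W' a)%N; last by lia.
  by rewrite sg2 exprS mulN1r.
rewrite mulr_sumr (bigID (fun S => a \in S)) /=; congr (_ + _).
  rewrite sum_setU1 [LHS](eq_bigl (fun T => T \subset U)); last first.
    move=> T; apply/andP/idP => [[h1 h2]|h].
      apply/subsetP => u uT; have := subsetP h1 u; rewrite !inE uT orbT.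
      move=> /(_ isT) /orP [/eqP eua|//]; by move: h2; rewrite -eua uT.
    split; first by apply: setUS.
    by apply: contra aU; apply: (subsetP h).
  apply: eq_bigr => T TU.
  have aT : a \notin T by apply: contra aU; apply: (subsetP TU).
  have -> : (a |: U) :\: (a |: T) = U :\: T.
    apply/setP => u; rewrite !inE; case: eqP => [->|] //=.
    by rewrite (negbTE aU) andbF.
  rewrite iotaE (negbTE aT); apply: comb5.
  rewrite -!exprD inv_setU1l // (cnt_sub a _ _ TU).
  by rewrite (_ : (_ + _ + _)%N = (inv T (U :\: T) + cnt T a) + cnt (U :\: T) a + cnt (U :\: T) a)%N ?sg2 //; lia.
rewrite [LHS](eq_bigl (fun S => S \subset U)); last first.
  move=> S; apply/andP/idP => [[h1 h2]|h].
    apply/subsetP => u uS; have := subsetP h1 u; rewrite !inE uS.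
    move=> /(_ isT) /orP [/eqP eua|//]; by move: h2; rewrite -eua uS.
  split; first by apply: subsetU; apply/orP; right.
  by apply: contra aU; apply: (subsetP h).
apply: eq_bigr => S SU.
have aS : a \notin S by apply: contra aU; apply: (subsetP SU).
have aW : a \notin U :\: S by rewrite !inE (negbTE aU) andbF.
have -> : (a |: U) :\: S = a |: (U :\: S).
  apply/setP => u; rewrite !inE; case: eqP => [->|] //=.
  by rewrite (negbTE aS).
rewrite tauE iotaE (negbTE aW); apply: comb6.
rewrite -!exprD inv_setU1r // (cnt_sub a _ _ SU) (card_cnt _ _ aS).
by congr (_ ^+ _); lia.
Qed.

Lemma wedgeDl x1 x2 y : wedge (x1 + x2) y = wedge x1 y + wedge x2 y.
Proof.
apply/ffunP => U; rewrite addE !wedgeE -big_split; apply: eq_bigr => S _.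
by rewrite addE /=; ring.
Qed.
Lemma wedgeDr x y1 y2 : wedge x (y1 + y2) = wedge x y1 + wedge x y2.
Proof.
apply/ffunP => U; rewrite addE !wedgeE -big_split; apply: eq_bigr => S _.
by rewrite addE /=; ring.
Qed.
Lemma wedge0l y : wedge 0 y = 0.
Proof. by apply/ffunP => U; rewrite wedgeE zeroE big1 // => S _; rewrite zeroE; ring. Qed.
Lemma wedge0r x : wedge x 0 = 0.
Proof. by apply/ffunP => U; rewrite wedgeE zeroE big1 // => S _; rewrite zeroE; ring. Qed.
Lemma wedge_suml I (rr : seq I) (Q : pred I) (f : I -> E) y :
  wedge (\sum_(i <- rr | Q i) f i) y = \sum_(i <- rr | Q i) wedge (f i) y.
Proof.
elim: rr => [|i0 rr ih]; first by rewrite !big_nil ?wedge0l.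
by rewrite !big_cons; case: (Q i0); rewrite // ?wedgeDl ?wedgeDr ?iotaD ?tauD ?mulED ?mulEDp ih.
Qed.
Lemma wedge_sumr I (rr : seq I) (Q : pred I) (f : I -> E) x :
  wedge x (\sum_(i <- rr | Q i) f i) = \sum_(i <- rr | Q i) wedge x (f i).
Proof.
elim: rr => [|i0 rr ih]; first by rewrite !big_nil ?wedge0r.
by rewrite !big_cons; case: (Q i0); rewrite // ?wedgeDl ?wedgeDr ?iotaD ?tauD ?mulED ?mulEDp ih.
Qed.
Lemma wedgeMl p x y : wedge (mulE p x) y = mulE p (wedge x y).
Proof.
apply/ffunP => U; rewrite mulEE !wedgeE mulr_sumr; apply: eq_bigr => S _.
by rewrite mulEE; ring.
Qed.
Lemma wedgeMr p x y : wedge x (mulE p y) = mulE p (wedge x y).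
Proof.
apply/ffunP => U; rewrite mulEE !wedgeE mulr_sumr; apply: eq_bigr => S _.
by rewrite mulEE; ring.
Qed.

Lemma iotaD a x y : Defs.iota a (x + y) = Defs.iota a x + Defs.iota a y.
Proof. by apply/ffunP => U; rewrite addE !iotaE; case: (a \in U); rewrite ?addr0 // addE mulrDr. Qed.
Lemma iota0 a : Defs.iota a (0 : E) = 0.
Proof. by apply/ffunP => U; rewrite iotaE zeroE; case: (a \in U); rewrite ?zeroE ?mulr0. Qed.
Lemma iota_sum a I (rr : seq I) (Q : pred I) (f : I -> E) :
  Defs.iota a (\sum_(i <- rr | Q i) f i) = \sum_(i <- rr | Q i) Defs.iota a (f i).
Proof.
elim: rr => [|i0 rr ih]; first by rewrite !big_nil ?iota0.
by rewrite !big_cons; case: (Q i0); rewrite // ?wedgeDl ?wedgeDr ?iotaD ?tauD ?mulED ?mulEDp ih.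
Qed.
Lemma iotaM a p x : Defs.iota a (mulE p x) = mulE p (Defs.iota a x).
Proof.
apply/ffunP => U; rewrite mulEE !iotaE; case: (a \in U); first by rewrite mulr0.
by rewrite mulEE; ring.
Qed.

Lemma tauD x y : tau (x + y) = tau x + tau y.
Proof. by apply/ffunP => U; rewrite addE !tauE addE mulrDr. Qed.
Lemma tau0 : tau (0 : E) = 0.
Proof. by apply/ffunP => U; rewrite tauE !zeroE mulr0. Qed.
Lemma tau_sum I (rr : seq I) (Q : pred I) (f : I -> E) :
  tau (\sum_(i <- rr | Q i) f i) = \sum_(i <- rr | Q i) tau (f i).
Proof.
elim: rr => [|i0 rr ih]; first by rewrite !big_nil ?tau0.
by rewrite !big_cons; case: (Q i0); rewrite // ?tauD ih.
Qed.
Lemma tauM p x : tau (mulE p x) = mulE p (tau x).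
Proof. by apply/ffunP => U; rewrite mulEE !tauE mulEE; ring. Qed.
Lemma tau_wedge x y : tau (wedge x y) = wedge (tau x) (tau y).
Proof.
apply/ffunP => U; rewrite tauE !wedgeE mulr_sumr; apply: eq_bigr => S SU.
rewrite !tauE -(cardsID S U) (setIidPr SU) exprD; ring.
Qed.

Lemma mulED p x y : mulE p (x + y) = mulE p x + mulE p y.
Proof. by apply/ffunP => U; rewrite addE !mulEE addE mulrDr. Qed.
Lemma mulE0 p : mulE p 0 = 0.
Proof. by apply/ffunP => U; rewrite mulEE !zeroE mulr0. Qed.
Lemma mulE_sum p I (rr : seq I) (Q : pred I) (f : I -> E) :
  mulE p (\sum_(i <- rr | Q i) f i) = \sum_(i <- rr | Q i) mulE p (f i).
Proof.
elim: rr => [|i0 rr ih]; first by rewrite !big_nil ?mulE0.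
by rewrite !big_cons; case: (Q i0); rewrite // ?wedgeDl ?wedgeDr ?iotaD ?tauD ?mulED ?mulEDp ih.
Qed.
Lemma mulEDp p q x : mulE (p + q) x = mulE p x + mulE q x.
Proof. by apply/ffunP => U; rewrite addE !mulEE mulrDl. Qed.
Lemma mulE0p x : mulE 0 x = 0.
Proof. by apply/ffunP => U; rewrite mulEE !zeroE mul0r. Qed.
Lemma mulE_sump I (rr : seq I) (Q : pred I) (f : I -> P) x :
  mulE (\sum_(i <- rr | Q i) f i) x = \sum_(i <- rr | Q i) mulE (f i) x.
Proof.
elim: rr => [|i0 rr ih]; first by rewrite !big_nil ?mulE0p.
by rewrite !big_cons; case: (Q i0); rewrite // ?wedgeDl ?wedgeDr ?iotaD ?tauD ?mulED ?mulEDp ih.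
Qed.
Lemma mulEM p q x : mulE p (mulE q x) = mulE (p * q) x.
Proof. by apply/ffunP => U; rewrite !mulEE mulrA. Qed.
Lemma mulE1 x : mulE 1 x = x.
Proof. by apply/ffunP => U; rewrite mulEE mul1r. Qed.

Lemma wedge1l y : wedge (ext_one F n r) y = y.
Proof.
apply/ffunP => U; rewrite wedgeE (bigD1 set0) ?sub0set //= ffunE eqxx setD0.
rewrite big1 ?addr0 /inv ?big_set0 ?mul1r // => S /andP [_ nS].
by rewrite ffunE (negbTE nS) mulr0 mul0r.
Qed.
Lemma wedge1r x : wedge x (ext_one F n r) = x.
Proof.
apply/ffunP => U; rewrite wedgeE (bigD1 U) ?subxx //= ffunE setDv eqxx.
rewrite big1 ?addr0 /inv.
  by rewrite (eq_bigr (fun _ => 0%N)) ?big_const_idem ?mul1r ?mulr1 // => s _; rewrite big_set0.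
move=> S /andP [SU nS]; rewrite ffunE.
have -> : (U :\: S == set0) = false.
  apply/negbTE; rewrite setD_eq0; apply: contra nS => US.
  by rewrite eqEsubset SU US.
by rewrite mulr0.
Qed.

Definition Cw (w : {ffun 'I_r -> P}) xi : E := \sum_(a < r) mulE (w a) (Defs.iota a xi).

Lemma CwD w x y : Cw w (x + y) = Cw w x + Cw w y.
Proof. by rewrite /Cw -big_split; apply: eq_bigr => a _; rewrite iotaD mulED. Qed.
Lemma Cw0 w : Cw w 0 = 0.
Proof. by rewrite /Cw big1 // => a _; rewrite iota0 mulE0. Qed.
Lemma Cw_sum w I (rr : seq I) (Q : pred I) (f : I -> E) :
  Cw w (\sum_(i <- rr | Q i) f i) = \sum_(i <- rr | Q i) Cw w (f i).
Proof.
elim: rr => [|i0 rr ih]; first by rewrite !big_nil Cw0.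
by rewrite !big_cons; case: (Q i0); rewrite // CwD ih.
Qed.
Lemma Cw_wedge w x y : Cw w (wedge x y) = wedge (Cw w x) y + wedge (tau x) (Cw w y).
Proof.
rewrite /Cw wedge_suml wedge_sumr -big_split; apply: eq_bigr => a _ /=.
by rewrite iota_wedge mulED wedgeMl wedgeMr.
Qed.

Lemma ext1_set1 (v : 'I_r -> P) c : ext1 v [set c] = v c.
Proof.
rewrite ffunE (big_pred1 c) // => b /=.
apply/eqP/eqP => [e|->] //; apply/set1P; rewrite e set11 //.
Qed.

Lemma ext1_nsing (v : 'I_r -> P) S : (forall c, S != [set c]) -> ext1 v S = 0.
Proof. by move=> h; rewrite ffunE big_pred0 // => b; apply/negbTE. Qed.

Lemma eps_E a y U : eps a y U =
  if a \in U then (-1) ^+ cnt (U :\ a) a * y (U :\ a) else 0.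
Proof.
rewrite /eps wedgeE.
have z : forall S, S != [set a] -> ext1 (fun b => (b == a)%:R) S = 0 :> P.
  move=> S nS; rewrite ffunE big1 // => b /eqP eSb.
  by case: eqP => // eba; case/eqP: nS; rewrite eSb eba.
case: (boolP (a \in U)) => aU.
  rewrite (bigD1 [set a]) ?sub1set //= ext1_set1 eqxx big1 ?addr0.
    by rewrite /inv big_set1 mulr1.
  by move=> S /andP [_ nS]; rewrite z // mulr0 mul0r.
rewrite big1 // => S SU; rewrite z ?mulr0 ?mul0r //.
by apply: contra aU => /eqP eS; move: SU; rewrite eS sub1set.
Qed.

Lemma iota_ext1 b (v : 'I_r -> P) : Defs.iota b (ext1 v) = mulE (v b) (ext_one F n r).
Proof.
apply/ffunP => U; rewrite iotaE mulEE.
have -> : ext_one F n r U = (U == set0)%:R by rewrite ffunE.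
case: (boolP (U == set0)) => [/eqP ->|nU].
  rewrite inE setU0 ext1_set1 /cnt big_set0 mulr1; ring.
rewrite mulr0; case: (boolP (b \in U)) => bU //.
rewrite ext1_nsing ?mulr0 // => c; apply/eqP => e.
case/set0Pn: nU => u uU.
have : u \in [set c] by rewrite -e !inE uU orbT.
have : b \in [set c] by rewrite -e !inE eqxx.
rewrite !inE => /eqP ebc /eqP euc.
by move: bU; rewrite ebc -euc uU.
Qed.

Lemma tau_ext1 (v : 'I_r -> P) : tau (ext1 v) = mulE (-1) (ext1 v).
Proof.
apply/ffunP => S; rewrite tauE mulEE.
case: (boolP [exists c, S == [set c]]) => [/existsP [c /eqP ->]|].
  by rewrite cards1 expr1.
rewrite negb_exists => /forallP h.
by rewrite ext1_nsing ?mulr0.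
Qed.

Lemma extpairDl x y z : extpair (x + y) z = extpair x z + extpair y z.
Proof. by rewrite /extpair -big_split; apply: eq_bigr => S _; rewrite addE polypairDl. Qed.
Lemma extpair0l z : extpair 0 z = 0.
Proof. by rewrite /extpair big1 // => S _; rewrite zeroE polypair0l. Qed.
Lemma extpairDr x y z : extpair x (y + z) = extpair x y + extpair x z.
Proof. by rewrite /extpair -big_split; apply: eq_bigr => S _; rewrite addE polypairDr. Qed.
Lemma extpair0r z : extpair z 0 = 0.
Proof. by rewrite /extpair big1 // => S _; rewrite zeroE polypair0r. Qed.
Lemma extpair_suml I (rr : seq I) (Q : pred I) (f : I -> E) z :
  extpair (\sum_(i <- rr | Q i) f i) z = \sum_(i <- rr | Q i) extpair (f i) z.
Proof.
elim: rr => [|i0 rr ih]; first by rewrite !big_nil extpair0l.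
by rewrite !big_cons; case: (Q i0); rewrite // extpairDl ih.
Qed.
Lemma extpair_sumr I (rr : seq I) (Q : pred I) (f : I -> E) z :
  extpair z (\sum_(i <- rr | Q i) f i) = \sum_(i <- rr | Q i) extpair z (f i).
Proof.
elim: rr => [|i0 rr ih]; first by rewrite !big_nil extpair0r.
by rewrite !big_cons; case: (Q i0); rewrite // extpairDr ih.
Qed.

Lemma extpair_eps a y xi : extpair (eps a y) xi = extpair y (Defs.iota a xi).
Proof.
rewrite /extpair (bigID (fun U => a \in U)) /= [X in _ + X]big1 ?addr0; last first.
  by move=> U aU; rewrite eps_E (negbTE aU) polypair0l.
rewrite [RHS](bigID (fun U => a \in U)) /= [X in _ = X + _]big1 ?add0r; last first.
  by move=> U aU; rewrite iotaE aU polypair0r.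
rewrite (eq_bigl (fun U => true && (a \in U))) // sum_setU1.
apply: eq_bigr => T /= aT.
by rewrite eps_E setU11 setU1K // iotaE (negbTE aT) polypair_signl polypair_signr.
Qed.

Lemma extpair_Dop s x z : extpair (ext_map (Dop s) x) z = extpair x (mulE s z).
Proof. by apply: eq_bigr => S _; rewrite !ffunE polypair_Dop. Qed.

Lemma extpair_dstar w x xi : extpair (dstar w x) xi = extpair x (Cw w xi).
Proof.
rewrite /dstar /Cw extpair_suml extpair_sumr; apply: eq_bigr => a _.
by rewrite extpair_eps extpair_Dop.
Qed.

End Ext.

End DevB.
Import DevB.

Module DevC.


Section Grp.
Variables (F : fieldType) (n r : nat) (gT : finGroupType) (G : {group gT}).
Variables (rV : mx_representation F G n) (rM : mx_representation F G r).
Local Notation P := {mpoly F[n]}.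
Local Notation E := (ext F n r).
Implicit Types (x y z : E) (S T U W : {set 'I_r}) (a : 'I_r).
Local Notation tau := (@DevB.tau F n r).
Local Notation mulE := (@DevB.mulE F n r).
Local Notation Cw := (@DevB.Cw F n r).
Local Notation cnt := (@DevB.cnt r).

Lemma sign_homog k : ((-1) ^+ k : P) \is 0.-homog.
Proof.
rewrite -signr_odd; case: (odd k); rewrite ?expr1 ?expr0 ?dhomog1 //.
by rewrite rpredN dhomog1.
Qed.

Definition fcat {k1 k2} (f1 : 'I_k1 -> E) (f2 : 'I_k2 -> E) (i : 'I_(k1 + k2)) : E :=
  match split i with inl j => f1 j | inr j => f2 j end.

Lemma fcatL k1 k2 f1 f2 (j : 'I_k1) : @fcat k1 k2 f1 f2 (lshift k2 j) = f1 j.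
Proof. by rewrite /fcat (unsplitK (inl _ : 'I_k1 + 'I_k2)). Qed.
Lemma fcatR k1 k2 f1 f2 (j : 'I_k2) : @fcat k1 k2 f1 f2 (rshift k1 j) = f2 j.
Proof. by rewrite /fcat (unsplitK (inr _ : 'I_k1 + 'I_k2)). Qed.

Lemma inJ0 : inJ rV rM 0.
Proof.
exists 0%N, (fun _ => 0), (fun _ => 0), (fun _ => 0); split; first by case.
by rewrite big_ord0.
Qed.

Lemma inJD x y : inJ rV rM x -> inJ rV rM y -> inJ rV rM (x + y).
Proof.
move=> [k1 [a1 [b1 [c1 [h1 ->]]]]] [k2 [a2 [b2 [c2 [h2 ->]]]]].
exists (k1 + k2)%N, (fcat a1 a2), (fcat b1 b2), (fcat c1 c2); split.
  by move=> i; rewrite /fcat; case: (split i) => j.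
by rewrite big_split_ord /=; congr (_ + _); apply: eq_bigr => j _;
  rewrite ?fcatL ?fcatR.
Qed.

Lemma inJ_sum k (f : 'I_k -> E) : (forall i, inJ rV rM (f i)) ->
  inJ rV rM (\sum_(i < k) f i).
Proof.
elim: k f => [|k ih] f h; first by rewrite big_ord0; exact: inJ0.
by rewrite big_ord_recr /=; apply: inJD => //; apply: ih.
Qed.

Lemma inJ_triple (a0 b c : E) e : invE rV rM b -> (0 < e)%N -> ext_homog e b ->
  inJ rV rM (wedge (wedge a0 b) c).
Proof.
move=> ib e0 hb; exists 1%N, (fun _ => a0), (fun _ => b), (fun _ => c); split.
  by move=> _; split => //; exists e.
by rewrite big_ord1.
Qed.

Lemma tau_homog e (b : E) : ext_homog e b -> ext_homog e (tau b).
Proof.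
move=> hb S; rewrite tauE => nz.
have nzb : b S != 0 by apply: contraNneq nz => ->; rewrite mulr0.
have [c1 c2] := hb S nzb; split => //.
by rewrite -[(e - #|S|)%N]add0n; apply: dhomogM => //; apply: sign_homog.
Qed.

Lemma Cw_homog (w : {ffun 'I_r -> P}) d e (b : E) :
  (forall a, w a \is d.-homog) -> ext_homog e b ->
  ext_homog (e.-1 + d) (Cw w b).
Proof.
move=> hw hb T; rewrite /Cw sum_ffunE => nz.
have key : forall a, (a \notin T) -> b (a |: T) != 0 ->
    (#|T| < e)%N /\ b (a |: T) \is (e - #|T|.+1)%N.-homog.
  move=> a aT nzb; have [c1 c2] := hb _ nzb.
  by move: c1 c2; rewrite cardsU1 aT add1n.
case: (ltnP #|T| e) => Te.
  split; first by lia.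
  apply: rpred_sum => a _; rewrite mulEE iotaE.
  case: (boolP (a \in T)) => aT; first by rewrite mulr0 dhomog0.
  case: (eqVneq (b (a |: T)) 0) => [->|nzb]; first by rewrite !mulr0 dhomog0.
  have [_ hh] := key a aT nzb.
  have -> : (e.-1 + d - #|T| = d + (0 + (e - #|T|.+1)))%N by lia.
  by apply: dhomogM => //; apply: dhomogM => //; apply: sign_homog.
exfalso; move/eqP: nz; apply; apply: big1 => a _; rewrite mulEE iotaE.
case: (boolP (a \in T)) => aT; first by rewrite mulr0.
case: (eqVneq (b (a |: T)) 0) => [->|nzb]; first by rewrite !mulr0.
by have [h _] := key a aT nzb; lia.
Qed.

Local Notation act g := (actS (rV g)).
Definition vs (g : gT) (s : 'I_r) : 'I_r -> P := fun b => (rM g s b)%:MP.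
Definition EL (g : gT) (L : seq 'I_r) : E := \big[@wedge F n r/ext_one F n r]_(s <- L) ext1 (vs g s).
Definition wa (g : gT) (a : 'I_r) : {ffun 'I_r -> P} := [ffun c => (rM (g^-1)%g c a)%:MP].

Lemma actEE g x : actE rV rM g x = \sum_(S : {set 'I_r}) mulE (act g (x S)) (EL g (enum S)).
Proof. by []. Qed.

Lemma actS_mul g (p q : P) : act g (p * q) = act g p * act g q.
Proof. by rewrite /actS rmorphM. Qed.
Lemma actS_sign g k : act g ((-1) ^+ k) = (-1) ^+ k.
Proof. by rewrite /actS rmorph_sign. Qed.
Lemma actS_sum g I (rr : seq I) (Q : pred I) (f : I -> P) :
  act g (\sum_(i <- rr | Q i) f i) = \sum_(i <- rr | Q i) act g (f i).
Proof. by rewrite /actS rmorph_sum. Qed.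
Lemma actS0 g : act g 0 = 0.
Proof. by rewrite /actS rmorph0. Qed.
Lemma actS_C g c : act g c%:MP = c%:MP.
Proof. by rewrite /actS comp_mpolyC. Qed.

Lemma tau_one : tau (ext_one F n r) = ext_one F n r.
Proof.
apply/ffunP => S; rewrite tauE ffunE; case: eqP => [->|]; first by rewrite cards0 expr0 mul1r.
by rewrite mulr0.
Qed.

Lemma tau_EL g L : tau (EL g L) = mulE ((-1) ^+ size L) (EL g L).
Proof.
elim: L => [|s L ih]; first by rewrite /EL big_nil tau_one expr0 mulE1.
rewrite /EL big_cons -/(EL g L) tau_wedge tau_ext1 ih wedgeMl wedgeMr mulEM.
by rewrite exprS.
Qed.

Lemma actE_tau g x : actE rV rM g (tau x) = tau (actE rV rM g x).
Proof.
rewrite !actEE tau_sum; apply: eq_bigr => S _.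
by rewrite tauE actS_mul actS_sign tauM tau_EL mulEM -cardE mulrC.
Qed.

Lemma invE_tau b : invE rV rM b -> invE rV rM (tau b).
Proof. by move=> ib g gG; rewrite actE_tau ib. Qed.

Lemma iota_one a : Defs.iota a (ext_one F n r) = 0.
Proof.
apply/ffunP => U; rewrite iotaE zeroE; case: (a \in U) => //.
rewrite ffunE; have -> : (a |: U == set0) = false.
  by apply/negbTE/set0Pn; exists a; rewrite setU11.
by rewrite mulr0.
Qed.

Lemma Cw_one w : Cw w (ext_one F n r) = 0.
Proof. by rewrite /Cw big1 // => a _; rewrite iota_one mulE0. Qed.

Lemma Cw_mulE w p x : Cw w (mulE p x) = mulE p (Cw w x).
Proof.
rewrite /Cw mulE_sum; apply: eq_bigr => a _.
by rewrite iotaM !mulEM mulrC.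
Qed.

Lemma Da_ext1 g a s : g \in G -> Cw (wa g a) (ext1 (vs g s)) = mulE ((s == a)%:R) (ext_one F n r).
Proof.
move=> gG; rewrite /Cw.
under eq_bigr do rewrite iota_ext1 mulEM ffunE.
rewrite -mulE_sump; congr mulE.
rewrite /vs.
under eq_bigr do rewrite -rmorphM.
rewrite -rmorph_sum -mpolyC_nat; congr (_%:MP).
have -> : \sum_(i < r) rM (g^-1)%g i a * rM g s i = (rM g *m rM (g^-1)%g) s a.
  by rewrite mxE; apply: eq_bigr => i _; rewrite mulrC.
by rewrite -repr_mxM ?groupV // mulgV repr_mx1 mxE.
Qed.

Definition ltnI (u v : 'I_r) := (u < v)%N.

Lemma Da_list g a L : g \in G -> sorted ltnI L ->
  Cw (wa g a) (EL g L) =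
  if a \in L then mulE ((-1) ^+ count (fun u : 'I_r => (u < a)%N) L) (EL g (rem a L)) else 0.
Proof.
move=> gG; elim: L => [|s L ih] sL; first by rewrite /EL big_nil Cw_one.
have sL' : sorted ltnI L by apply: path_sorted sL.
have allL : all (ltnI s) L.
  by apply: order_path_min sL => x y z; apply: ltn_trans.
rewrite /EL big_cons -/(EL g L) Cw_wedge Da_ext1 // tau_ext1 ih //.
rewrite wedgeMl wedge1l wedgeMl.
case: (eqVneq s a) => [esa|nsa].
  subst s; have aL : a \notin L.
    apply/negP => aL; have := allP allL a aL; by rewrite /ltnI ltnn.
  rewrite (negbTE aL) wedge0r mulE0 addr0 mem_head /= eqxx mulE1.
  rewrite ltnn add0n (@eq_in_count _ _ pred0); last first.
    by move=> u uL; have := allP allL u uL; rewrite /ltnI /=; case: ltngtP.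
  by rewrite count_pred0 expr0 mulE1.
rewrite mulE0p add0r in_cons eq_sym (negbTE nsa) /=.
case: (boolP (a \in L)) => aL; last by rewrite wedge0r mulE0.
rewrite wedgeMr mulEM (negbTE nsa) /EL big_cons.
have sa : (s < a)%N by have := allP allL a aL.
by rewrite sa exprS.
Qed.

Lemma enumE S : enum S = [seq x <- enum 'I_r | x \in S].
Proof. by rewrite {1}/enum_mem -enumT. Qed.

Lemma sorted_enumS S : sorted ltnI (enum S).
Proof.
rewrite enumE; apply: sorted_filter; first by move=> x y z; apply: ltn_trans.
have := iota_ltn_sorted 0 r; rewrite -val_enum_ord sorted_map.
by apply: sub_sorted.
Qed.

Lemma count_cnt S a : count (fun u : 'I_r => (u < a)%N) (enum S) = cnt S a.
Proof.
rewrite /DevB.cnt -big_enum /=; elim: (enum S) => [|u l ih]; first by rewrite big_nil.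
by rewrite big_cons /= ih.
Qed.

Lemma rem_enum S a : rem a (enum S) = enum (S :\ a).
Proof.
rewrite !enumE rem_filter ?filter_uniq -?enumT ?enum_uniq // -filter_predI.
by apply: eq_filter => u; rewrite !inE.
Qed.

Lemma Da_enum g a S : g \in G ->
  Cw (wa g a) (EL g (enum S)) =
  if a \in S then mulE ((-1) ^+ cnt S a) (EL g (enum (S :\ a))) else 0.
Proof.
move=> gG; rewrite Da_list // ?sorted_enumS // mem_enum count_cnt rem_enum //.
Qed.

Lemma Cw_actMs g w Y : Cw (actMs rV rM g w) Y =
  \sum_(a < r) mulE (act g (w a)) (Cw (wa g a) Y).
Proof.
rewrite /Cw.
under eq_bigr do rewrite ffunE mulE_sump.
rewrite exchange_big /=; apply: eq_bigr => a _.
rewrite mulE_sum; apply: eq_bigr => c _.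
by rewrite ffunE mulEM -mul_mpolyC mulrC.
Qed.

Lemma cnt_self a T : cnt (a |: T) a = cnt T a.
Proof.
case: (boolP (a \in T)) => aT; first by rewrite (setUidPr _) // sub1set.
by rewrite /DevB.cnt big_setU1 //= ltnn.
Qed.

Lemma Cw_nat g w b : g \in G ->
  actE rV rM g (Cw w b) = Cw (actMs rV rM g w) (actE rV rM g b).
Proof.
move=> gG; rewrite Cw_actMs !actEE.
under eq_bigr do rewrite /Cw sum_ffunE actS_sum mulE_sump.
rewrite exchange_big /=; apply: eq_bigr => a _.
rewrite Cw_sum mulE_sum.
under [RHS]eq_bigr do rewrite Cw_mulE Da_enum //.
rewrite (bigID (fun S => a \in S)) /= [X in X + _]big1 ?add0r; last first.
  by move=> T aT; rewrite mulEE iotaE aT mulr0 actS0 mulE0p.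
rewrite [RHS](bigID (fun S => a \in S)) /= [X in _ = _ + X]big1 ?addr0; last first.
  by move=> S aS; rewrite (negbTE aS) !mulE0.
rewrite [RHS](eq_bigl (fun S => true && (a \in S))) // sum_setU1 /=.
apply: eq_bigr => T aT.
rewrite setU11 setU1K // cnt_self mulEE iotaE (negbTE aT) !mulEM.
rewrite !actS_mul actS_sign; congr mulE; ring.
Qed.

Lemma invE_Cw w b : invMs rV rM w -> invE rV rM b -> invE rV rM (Cw w b).
Proof. by move=> iw ib g gG; rewrite Cw_nat // iw // ib. Qed.

End Grp.
End DevC.
Import DevC.

Module DevD.


Section Main.
Variables (F : fieldType) (n r : nat) (gT : finGroupType) (G : {group gT}).
Variables (rV : mx_representation F G n) (rM : mx_representation F G r).
Local Notation P := {mpoly F[n]}.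
Local Notation E := (ext F n r).
Local Notation tau := (@DevB.tau F n r).
Local Notation mulE := (@DevB.mulE F n r).
Local Notation Cw := (@DevB.Cw F n r).
Local Notation cnt := (@DevB.cnt r).

Lemma inJ_Cw w d xi : inJ rV rM xi -> invMs rV rM w ->
  (forall a, w a \is d.-homog) -> (0 < d)%N -> inJ rV rM (Cw w xi).
Proof.
move=> [k [a [b [c [h ->]]]]] iw hw d0; rewrite Cw_sum; apply: inJ_sum => i.
have [ib [e e0 hb]] := h i.
rewrite Cw_wedge Cw_wedge wedgeDl tau_wedge; apply: inJD; first apply: inJD.
- exact: (@inJ_triple F n r gT G rV rM _ _ _ e ib e0 hb).
- apply: (@inJ_triple F n r gT G rV rM _ _ _ (e.-1 + d)%N).
  + exact: invE_Cw.
  + by lia.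
  + exact: Cw_homog.
- apply: (@inJ_triple F n r gT G rV rM _ _ _ e) => //.
  + exact: invE_tau.
  + exact: tau_homog.
Qed.

Lemma homog0_const (p : P) : p \is 0.-homog -> p = (p@_0)%:MP.
Proof.
move=> hp; apply/mpolyP => m; rewrite mcoeffC.
case: (eqVneq m 0%MM) => [->|nm]; first by rewrite mulr1.
by rewrite mulr0; apply: (dhomog_nemf_coeff hp); rewrite mdeg_eq0.
Qed.

Lemma basis_nz (inv : {ffun 'I_r -> P} -> Prop) (w : 'I_r -> {ffun 'I_r -> P}) i : hom_basis rV inv w -> w i != 0.
Proof.
case=> _ _ _ hind; apply/eqP => wi0.
suff: ((i == i)%:R : P) = 0 by rewrite eqxx => /eqP; rewrite oner_eq0.
apply: (hind (fun k => (k == i)%:R)).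
  by move=> k g gG; rewrite /actS rmorph_nat.
apply/ffunP => a; rewrite !ffunE (bigD1 i) //= eqxx mul1r big1 ?addr0.
  by rewrite wi0 ffunE.
by move=> k nk; rewrite (negbTE nk) mul0r.
Qed.

Lemma pos_deg_M (wM : 'I_r -> {ffun 'I_r -> P}) j d :
  hom_basis rV (invM rV rM) wM -> no_fixed_points rM ->
  (forall a, wM j a \is d.-homog) -> (0 < d)%N.
Proof.
move=> hb nf; case: d => // hd; exfalso.
have := basis_nz _ _ j hb; apply/negP; rewrite negbK.
case: hb => inv _ _ _.
pose c := fun a => (wM j a)@_0.
have wc : forall a, wM j a = (c a)%:MP by move=> a; apply: homog0_const.
have fixv : forall g, g \in G -> \row_a c a *m rM g = \row_a c a.
  move=> g gG; apply/rowP => b; rewrite !mxE.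
  have e := congr1 (fun f : {ffun 'I_r -> P} => (f b)@_0) (inv j g gG).
  rewrite /= ffunE in e; rewrite -[c b]/((wM j b)@_0) -e.
  rewrite raddf_sum /=; apply: eq_bigr => a _.
  by rewrite mxE wc actS_C mcoeffZ mcoeffC eqxx mulr1 mulrC.
have v0 := nf _ fixv.
apply/eqP/ffunP => a; rewrite wc ffunE.
have := congr1 (fun v : 'rV_r => v 0 a) v0; rewrite !mxE => ->.
by rewrite mpolyC0.
Qed.

Lemma pos_deg_Ms (wMs : 'I_r -> {ffun 'I_r -> P}) i d :
  [pchar F] =i pred0 ->
  hom_basis rV (invMs rV rM) wMs -> no_fixed_points rM ->
  (forall a, wMs i a \is d.-homog) -> (0 < d)%N.
Proof.
move=> ch hb nf; case: d => // hd; exfalso.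
have nz := basis_nz _ _ i hb; case: hb => inv _ _ _.
pose c := fun a => (wMs i a)@_0.
have wc : forall a, wMs i a = (c a)%:MP by move=> a; apply: homog0_const.
pose u := \col_a c a : 'cV[F]_r.
have fixu : forall h, h \in G -> rM h *m u = u.
  move=> h hG; apply/colP => b; rewrite !mxE.
  have e := congr1 (fun f : {ffun 'I_r -> P} => (f b)@_0) (inv i (h^-1)%g (groupVr hG)).
  rewrite /= ffunE in e; rewrite -[c b]/((wMs i b)@_0) -e.
  rewrite raddf_sum /=; apply: eq_bigr => a _.
  by rewrite mxE wc actS_C mcoeffZ mcoeffC eqxx mulr1 invgK.
pose Pm := \sum_(h in G) rM h.
have PmU : Pm *m u = (#|G|%:R : F) *: u.
  rewrite mulmx_suml (eq_bigr (fun _ => u)); last by move=> h hG; rewrite fixu.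
  by rewrite sumr_const scaler_nat.
have PmG : forall g, g \in G -> Pm *m rM g = Pm.
  move=> g gG; rewrite mulmx_suml.
  rewrite (eq_bigr (fun h => rM (h * g)%g)); last by move=> h hG; rewrite repr_mxM.
  rewrite [RHS](reindex_inj (mulIg g)) /=; apply: eq_bigl => h.
  by rewrite groupMr.
have [a ca] : exists a, c a != 0.
  case: (pickP (fun a => c a != 0)) => [a ca|h0]; first by exists a.
  exfalso; move/eqP: nz; apply; apply/ffunP => a; rewrite wc.
  by have := h0 a; rewrite /= => /negbFE /eqP ->; rewrite mpolyC0 ffunE.
have rowfix : forall g, g \in G -> row a Pm *m rM g = row a Pm.
  by move=> g gG; rewrite -row_mul PmG.
have r0 := nf _ rowfix.
have := congr1 (fun M : 'cV_r => M a 0) PmU.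
have -> : (Pm *m u) a 0 = (row a Pm *m u) 0 0 by rewrite -row_mul [RHS]mxE.
rewrite r0 mul0mx !mxE => /esym /eqP.
have hG : (#|G|%:R : F) != 0 by rewrite ((pcharf0P F).1 ch) -lt0n cardG_gt0.
by rewrite mulf_eq0 (negbTE hG) (negbTE ca).
Qed.

End Main.

End DevD.
Import DevD.



Section Fin.
Variables (F : fieldType) (n r : nat).
Local Notation P := {mpoly F[n]}.
Local Notation E := (ext F n r).
Local Notation mulE := (@DevB.mulE F n r).
Local Notation one := (ext_one F n r).

Lemma ext_map_Dop_x0 s f : ext_map (Dop s) (mulE f one) = mulE (Dop s f) one.
Proof.
apply/ffunP => U; rewrite !ffunE.
by case: (U == set0); rewrite ?mulr1 ?mulr0 ?Dop0.
Qed.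

Lemma dstar_zero (w : {ffun 'I_r -> P}) : dstar w (0 : E) = 0.
Proof.
rewrite /dstar big1 // => a _.
have -> : ext_map (Dop (w a)) (0 : E) = 0 by apply/ffunP => U; rewrite !ffunE Dop0.
by rewrite /eps wedge0r.
Qed.

Lemma deltastar_x0 (w : {ffun 'I_r -> P}) f : deltastar w (mulE f one) = 0.
Proof.
by rewrite /deltastar big1 // => a _; rewrite ext_map_Dop_x0 iotaM iota_one mulE0.
Qed.

Lemma dstar_x0_single (w : {ffun 'I_r -> P}) f b :
  dstar w (mulE f one) [set b] = Dop (w b) f.
Proof.
rewrite /dstar sum_ffunE (bigD1 b) //= big1 ?addr0.
  rewrite ext_map_Dop_x0 eps_E set11 setDv mulEE ffunE eqxx /DevB.cnt big_set0.
  by rewrite expr0 mul1r mulr1.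
move=> a nab; rewrite eps_E inE.
by have -> : (a == b) = false by apply/negbTE.
Qed.

Lemma deltastar_at0 (w : {ffun 'I_r -> P}) (Y : E) :
  deltastar w Y set0 = \sum_(b < r) Dop (w b) (Y [set b]).
Proof.
rewrite /deltastar sum_ffunE; apply: eq_bigr => b _.
by rewrite iotaE inE /DevB.cnt big_set0 expr0 mul1r setU0 ffunE.
Qed.

End Fin.

Theorem corollary5p6 (F : fieldType) (n r : nat) (gT : finGroupType)
  (G : {group gT}) (rV : mx_representation F G n) (rM : mx_representation F G r)
  (wMs wM : 'I_r -> {ffun 'I_r -> {mpoly F[n]}}) :
  [pchar F] =i pred0 ->
  mx_faithful rV ->
  (G :=: <<[set g in G | pseudo_reflection (rV g)]>>)%g ->
  no_fixed_points rM ->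
  hom_basis rV (invMs rV rM) wMs ->
  hom_basis rV (invM rV rM) wM ->
  (forall (i j : 'I_r) (L : {mpoly F[n]}),
     invS rV L ->
     (forall x : ext F n r,
        dstar (wMs i) (deltastar (wM j) x) + deltastar (wM j) (dstar (wMs i) x)
        = ext_map (Dop L) x) ->
     exists2 d, (0 < d)%N & L \is d.-homog)
  /\
  (forall (i : 'I_r) (x : ext F n r),
     harmonic rV rM x -> harmonic rV rM (dstar (wMs i) x)).
Proof.
move=> ch _ _ nf hbMs hbM.
have hbMs' := hbMs; have hbM' := hbM.
case: hbMs' => invw homMs _ _; case: hbM' => _ homM _ _.
split.
  move=> i j L _ hL.
  have [d1 hd1] := homMs i; have [d2 hd2] := homM j.
  have d2p := @pos_deg_M F n r gT G rV rM wM j d2 hbM nf hd2.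
  have keyD : forall f, Dop L f = \sum_(b < r) Dop (wM j b) (Dop (wMs i b) f).
    move=> f; have := congr1 (fun y : ext F n r => y set0) (hL (@DevB.mulE F n r f (ext_one F n r))).
    rewrite /= deltastar_x0 dstar_zero add0r deltastar_at0 ffunE mulEE ffunE eqxx mulr1.
    move=> <-; apply: eq_bigr => b _; by rewrite dstar_x0_single.
  pose L0 := \sum_(b < r) wMs i b * wM j b.
  have eqL : L = L0.
    apply/mpolyP => m.
    have hcf : ((\prod_(k < n) (m k)`!)%N%:R : F) != 0.
      by rewrite ((pcharf0P F).1 ch) -lt0n prodn_gt0 // => k; rewrite fact_gt0.
    apply: (mulIf hcf); rewrite -!polypairX.
    rewrite -[L]mulr1 -polypair_Dop keyD polypair_suml /L0 polypair_sumr.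
    apply: eq_bigr => b _; by rewrite !polypair_Dop mulr1.
  exists (d1 + d2)%N; first by lia.
  by rewrite eqL; apply: rpred_sum => b _; apply: dhomogM.
move=> i x hx xi hxi.
rewrite extpair_dstar; apply: hx.
have [d1 hd1] := homMs i.
apply: (@inJ_Cw F n r gT G rV rM _ d1) => //.
exact: (@pos_deg_Ms F n r gT G rV rM wMs i d1 ch hbMs nf hd1).
Qed.
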